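(* Let $\|\cdot\|$ be a norm on $\mathbb{R}^2$ with unit sphere $S=\{x\in\mathbb{R}^2:\|x\|=1\}$. The following are equivalent: (i) $\|\cdot\|$ is not a URTC-norm; (ii) there exist $c,d\in S$ with $\|c-d\|>1$ such that the segment $[c,d]=\{c+t(d-c):0\le t\le 1\}$ is contained in $S$. In particular, every strictly convex norm on $\mathbb{R}^2$ is a URTC-norm.
   Context: A norm $\|\cdot\|$ on $\mathbb{R}^2$ is called a URTC-norm if for every $a,b\in\mathbb{R}^2$ with $\|a-b\|=1$ the system $\|a-x\|=1$, $\|b-x\|=1$ is satisfied by exactly two points $x\in\mathbb{R}^2$. A norm is strictly convex if its unit sphere contains no non-degenerate line segment. *)

(* Defs.v *)
From Stdlib Require Import Reals.
Open Scope R_scope.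

Definition pt := (R * R)%type.
Definition padd (x y : pt) : pt := (fst x + fst y, snd x + snd y).
Definition psub (x y : pt) : pt := (fst x - fst y, snd x - snd y).
Definition pscale (t : R) (x : pt) : pt := (t * fst x, t * snd x).
Definition pzero : pt := (0, 0).

Record is_norm (N : pt -> R) : Prop := {
  norm_nonneg : forall x, 0 <= N x;
  norm_definite : forall x, N x = 0 -> x = pzero;
  norm_homog : forall (t : R) x, N (pscale t x) = Rabs t * N x;
  norm_triangle : forall x y, N (padd x y) <= N x + N y
}.

Definition unit_sphere (N : pt -> R) (x : pt) : Prop := N x = 1.

Definition URTC (N : pt -> R) : Prop :=
  forall a b : pt, N (psub a b) = 1 ->
    exists x1 x2 : pt, x1 <> x2 /\
      forall x : pt, (N (psub a x) = 1 /\ N (psub b x) = 1) <-> (x = x1 \/ x = x2).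

Definition segment (c d : pt) (x : pt) : Prop :=
  exists t : R, 0 <= t <= 1 /\ x = padd c (pscale t (psub d c)).

Definition strictly_convex (N : pt -> R) : Prop :=
  forall c d : pt, c <> d -> ~ (forall x, segment c d x -> unit_sphere N x).

(* Main.v *)
Require Import Defs.
From Stdlib Require Import Reals Lra Psatz Classical.
Open Scope R_scope.

Lemma pt_ext (p q : pt) : fst p = fst q -> snd p = snd q -> p = q.
Proof. destruct p, q; simpl; intros; subst; reflexivity. Qed.

Ltac pteq := apply pt_ext; simpl; field.
Ltac ptring := apply pt_ext; simpl; ring.

Lemma N_zero N (HN : is_norm N) : N pzero = 0.
Proof.
  replace pzero with (pscale 0 pzero) by ptring.
  rewrite (norm_homog _ HN), Rabs_R0; ring.
Qed.

Lemma N_pos N (HN : is_norm N) x : x <> pzero -> 0 < N x.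
Proof.
  intros H. destruct (norm_nonneg _ HN x) as [h|h]; auto.
  exfalso; apply H, (norm_definite _ HN); auto.
Qed.

Lemma N_opp N (HN : is_norm N) x : N (pscale (-1) x) = N x.
Proof. rewrite (norm_homog _ HN). rewrite Rabs_left1 by lra; ring. Qed.

Lemma N_sym N (HN : is_norm N) p q : N (psub p q) = N (psub q p).
Proof.
  replace (psub q p) with (pscale (-1) (psub p q)) by ptring.
  rewrite N_opp; auto.
Qed.

Lemma N_conv N (HN : is_norm N) th p q : 0 <= th <= 1 ->
  N (padd (pscale (1-th) p) (pscale th q)) <= (1-th) * N p + th * N q.
Proof.
  intros Hth. eapply Rle_trans. apply (norm_triangle _ HN).
  rewrite !(norm_homog _ HN), !Rabs_right by lra. lra.
Qed.

Definition line (p w : pt) (r : R) : pt := padd p (pscale r w).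

Lemma line_conv N (HN : is_norm N) p w l m h : l < h -> l <= m <= h ->
  (h-l) * N (line p w m) <= (h-m) * N (line p w l) + (m-l) * N (line p w h).
Proof.
  intros Hlh Hm.
  set (th := (m-l)/(h-l)).
  assert (Hth : 0 <= th <= 1).
  { unfold th; split.
    - apply Rmult_le_pos; [lra|]. left; apply Rinv_0_lt_compat; lra.
    - apply (Rmult_le_reg_r (h-l)); [lra|]. unfold Rdiv; rewrite Rmult_assoc, Rinv_l by lra. lra. }
  assert (E : line p w m = padd (pscale (1-th) (line p w l)) (pscale th (line p w h))).
  { unfold th, line; apply pt_ext; simpl; field; lra. }
  rewrite E. pose proof (N_conv N HN th (line p w l) (line p w h) Hth) as C.
  assert (E1 : (h-l)*(1-th) = h-m) by (unfold th; field; lra).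
  assert (E2 : (h-l)*th = m-l) by (unfold th; field; lra).
  apply Rmult_le_compat_l with (r := h-l) in C; [|lra].
  rewrite Rmult_plus_distr_l, <- !Rmult_assoc, E1, E2 in C. exact C.
Qed.

Lemma seg_lemma N (HN : is_norm N) p w l m h : l < m < h ->
  N (line p w l) = 1 -> N (line p w m) = 1 -> N (line p w h) = 1 ->
  forall r, l <= r <= h -> N (line p w r) = 1.
Proof.
  intros Hm Hl HM Hh r Hr.
  pose proof (line_conv N HN p w l r h ltac:(lra) Hr) as U.
  rewrite Hl, Hh in U.
  destruct (Rtotal_order r m) as [Hlt|[Heq|Hgt]].
  - pose proof (line_conv N HN p w r m h ltac:(lra) ltac:(lra)) as L.
    rewrite HM, Hh in L. nra.
  - subst; auto.
  - pose proof (line_conv N HN p w l m r ltac:(lra) ltac:(lra)) as L.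
    rewrite HM, Hl in L. nra.
Qed.

Definition SegProp (N : pt -> R) : Prop :=
  exists c d : pt, unit_sphere N c /\ unit_sphere N d /\ N (psub c d) > 1 /\
      (forall x, segment c d x -> unit_sphere N x).

Lemma mk_seg N (HN : is_norm N) p w l m h : l < m < h ->
  N (line p w l) = 1 -> N (line p w m) = 1 -> N (line p w h) = 1 ->
  (h - l) * N w > 1 -> SegProp N.
Proof.
  intros Hm Hl HM Hh Hw.
  exists (line p w l), (line p w h). unfold unit_sphere. split; [auto|split;[auto|split]].
  - replace (psub (line p w l) (line p w h)) with (pscale (l-h) w) by (unfold line; ptring).
    rewrite (norm_homog _ HN), Rabs_left1 by lra. lra.
  - intros x [t [Ht ->]].
    replace (padd (line p w l) (pscale t (psub (line p w h) (line p w l))))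
      with (line p w (l + t*(h-l))) by (unfold line; ptring).
    apply (seg_lemma N HN p w l m h); auto. nra.
Qed.

Definition det (u w : pt) : R := fst u * snd w - snd u * fst w.

Lemma u_nz N (HN : is_norm N) u : N u = 1 -> fst u * fst u + snd u * snd u > 0.
Proof.
  intros Hu. destruct u as [a b]; simpl.
  destruct (Req_dec a 0) as [Ha|Ha]; [destruct (Req_dec b 0) as [Hb|Hb]|].
  - subst. change (N pzero = 1) in Hu. rewrite (N_zero N HN) in Hu. lra.
  - assert (0 < b*b) by (apply Rsqr_pos_lt in Hb; unfold Rsqr in Hb; lra). nra.
  - assert (0 < a*a) by (apply Rsqr_pos_lt in Ha; unfold Rsqr in Ha; lra). nra.
Qed.

Lemma par N (HN : is_norm N) u w : N u = 1 -> det u w = 0 -> exists s, w = pscale s u.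
Proof.
  intros Hu Hd. pose proof (u_nz N HN u Hu) as D.
  unfold det in Hd. destruct u as [a b], w as [c e]; simpl in *.
  exists ((a*c + b*e)/(a*a+b*b)). apply pt_ext; simpl.
  - field_simplify_eq; [assert (X1 : a*(a*e-b*c)=0) by (rewrite Hd; ring); assert (X2 : b*(a*e-b*c)=0) by (rewrite Hd; ring); nra|lra].
  - field_simplify_eq; [assert (X1 : a*(a*e-b*c)=0) by (rewrite Hd; ring); assert (X2 : b*(a*e-b*c)=0) by (rewrite Hd; ring); nra|lra].
Qed.

Lemma core_parallel N (HN : is_norm N) u z s : N u = 1 -> s <> 0 ->
  N z = 1 -> N (psub u z) = 1 -> N (line z u s) = 1 -> N (psub u (line z u s)) = 1 ->
  SegProp N.
Proof.
  intros Hu Hs Hz Hz' Hy Hy'.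
  assert (L0 : N (line z u 0) = 1).
  { replace (line z u 0) with z by (unfold line; ptring). auto. }
  assert (L1 : N (line z u (-1)) = 1).
  { replace (line z u (-1)) with (psub z u) by (unfold line; ptring). rewrite (N_sym N HN); auto. }
  assert (L2 : N (line z u (s-1)) = 1).
  { replace (line z u (s-1)) with (psub (line z u s) u) by (unfold line; ptring). rewrite (N_sym N HN); auto. }
  destruct (Rlt_or_le 0 s).
  - apply (mk_seg N HN z u (-1) 0 s); auto; try rewrite Hu; lra.
  - apply (mk_seg N HN z u (s-1) (-1) 0); auto; try rewrite Hu; lra.
Qed.

Lemma core_pos N (HN : is_norm N) u (Hu : N u = 1) (NS : ~ SegProp N) y z :
  N y = 1 -> N (psub u y) = 1 -> N z = 1 -> N (psub u z) = 1 -> z <> y ->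
  0 <= det u z -> det u z <= det u y -> False.
Proof.
  intros Hy Hy' Hz Hz' Hzy Hc Hcb.
  destruct Hcb as [Hlt|Heq].
  2:{ destruct (par N HN u (psub y z) Hu) as [s Hs].
      { unfold det in *; simpl. lra. }
      apply NS. apply (core_parallel N HN u z s Hu); auto.
      - intro; subst s. apply Hzy. apply pt_ext; [apply (f_equal fst) in Hs|apply (f_equal snd) in Hs]; simpl in *; lra.
      - replace (line z u s) with y; auto. unfold line; apply pt_ext;
          [apply (f_equal fst) in Hs|apply (f_equal snd) in Hs]; simpl in *; lra.
      - replace (line z u s) with y; auto. unfold line; apply pt_ext;
          [apply (f_equal fst) in Hs|apply (f_equal snd) in Hs]; simpl in *; lra. }
  set (b := det u y) in *. set (c := det u z) in *.
  set (la := (b - c)/(2*b)).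
  assert (Hla : 0 < la <= 1/2).
  { unfold la; split.
    - apply Rdiv_lt_0_compat; lra.
    - apply (Rmult_le_reg_r (2*b)); [lra|]. unfold Rdiv; rewrite Rmult_assoc, Rinv_l by lra. lra. }
  set (dd := psub u (pscale 2 y)).
  set (A := line y dd la).
  assert (NA : N A < 1).
  { pose proof (line_conv N HN y dd 0 la (1/2) ltac:(lra) ltac:(lra)) as C.
    replace (line y dd 0) with y in C by (unfold line, dd; ptring).
    replace (line y dd (1/2)) with (pscale (1/2) u) in C by (unfold line, dd; pteq).
    rewrite (norm_homog _ HN), Rabs_right, Hu, Hy in C by lra. fold A in C. nra. }
  assert (NA' : N (line A u (-1)) < 1).
  { pose proof (line_conv N HN (psub y u) dd 0 la (1/2) ltac:(lra) ltac:(lra)) as C.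
    replace (line (psub y u) dd 0) with (psub y u) in C by (unfold line, dd; ptring).
    replace (line (psub y u) dd (1/2)) with (pscale (-1/2) u) in C by (unfold line, dd; pteq).
    replace (line (psub y u) dd la) with (line A u (-1)) in C by (unfold A, line, dd; ptring).
    rewrite (norm_homog _ HN) in C. rewrite Rabs_left1 in C by lra. rewrite Hu in C. rewrite (N_sym N HN) in C. rewrite Hy' in C. nra. }
  destruct (par N HN u (psub z A) Hu) as [t Ht].
  { unfold det, A, line, dd in *; simpl. unfold la. field_simplify_eq; [|lra]. 
    unfold b, c, det. ring. }
  assert (Zt : N (line A u t) = 1).
  { replace (line A u t) with z; auto. unfold line; apply pt_ext;
      [apply (f_equal fst) in Ht|apply (f_equal snd) in Ht]; simpl in *; lra. }
  assert (Zt1 : N (line A u (t-1)) = 1).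
  { replace (line A u (t-1)) with (psub z u). rewrite (N_sym N HN); auto. unfold line; apply pt_ext;
      [apply (f_equal fst) in Ht|apply (f_equal snd) in Ht]; simpl in *; lra. }
  assert (L0 : N (line A u 0) < 1).
  { replace (line A u 0) with A by (unfold line; ptring). auto. }
  destruct (Rlt_or_le t (-1)) as [H1|H1];
  [|destruct (Rle_or_lt t 0) as [H2|H2];
  [|destruct (Rle_or_lt t 1) as [H3|H3]]].
  - pose proof (line_conv N HN A u (t-1) t 0 ltac:(lra) ltac:(lra)) as C.
    rewrite Zt, Zt1 in C. nra.
  - pose proof (line_conv N HN A u (-1) t 0 ltac:(lra) ltac:(lra)) as C.
    rewrite Zt in C.
    set (X := N (line A u (-1))) in *. set (Y := N (line A u 0)) in *.
    assert (Rmax X Y < 1) by (apply Rmax_lub_lt; auto).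
    assert ((0 - t) * X <= (0 - t) * Rmax X Y) by (apply Rmult_le_compat_l; [lra|apply Rmax_l]).
    assert ((t - -1) * Y <= (t - -1) * Rmax X Y) by (apply Rmult_le_compat_l; [lra|apply Rmax_r]).
    lra.
  - pose proof (line_conv N HN A u (-1) (t-1) 0 ltac:(lra) ltac:(lra)) as C.
    rewrite Zt1 in C.
    set (X := N (line A u (-1))) in *. set (Y := N (line A u 0)) in *.
    assert (Rmax X Y < 1) by (apply Rmax_lub_lt; auto).
    assert ((0 - (t-1)) * X <= (0 - (t-1)) * Rmax X Y) by (apply Rmult_le_compat_l; [lra|apply Rmax_l]).
    assert ((t - 1 - -1) * Y <= (t - 1 - -1) * Rmax X Y) by (apply Rmult_le_compat_l; [lra|apply Rmax_r]).
    lra.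
  - pose proof (line_conv N HN A u 0 (t-1) t ltac:(lra) ltac:(lra)) as C.
    rewrite Zt, Zt1 in C. nra.
Qed.

Lemma N_lip N (HN : is_norm N) p q :
  N p - N q <= (N (1,0) + N (0,1)) * (Rabs (fst p - fst q) + Rabs (snd p - snd q)).
Proof.
  assert (E : p = padd q (padd (pscale (fst p - fst q) (1,0)) (pscale (snd p - snd q) (0,1))))
    by ptring.
  pose proof (norm_triangle _ HN q (padd (pscale (fst p - fst q) (1,0)) (pscale (snd p - snd q) (0,1)))) as T1.
  pose proof (norm_triangle _ HN (pscale (fst p - fst q) (1,0)) (pscale (snd p - snd q) (0,1))) as T2.
  rewrite <- E in T1. rewrite !(norm_homog _ HN) in T2.
  pose proof (norm_nonneg _ HN (1,0)). pose proof (norm_nonneg _ HN (0,1)).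
  pose proof (Rabs_pos (fst p - fst q)). pose proof (Rabs_pos (snd p - snd q)).
  nra.
Qed.

Lemma cont_N N (HN : is_norm N) g1 g2 : continuity g1 -> continuity g2 ->
  continuity (fun t => N (g1 t, g2 t)).
Proof.
  intros C1 C2 x. unfold continuity_pt, continue_in, limit1_in, limit_in.
  intros eps Heps. simpl. unfold R_dist.
  set (K := N (1,0) + N (0,1) + 1).
  assert (HK : 0 < K) by (unfold K; pose proof (norm_nonneg _ HN (1,0)); pose proof (norm_nonneg _ HN (0,1)); lra).
  assert (He : eps / (2*K) > 0) by (apply Rdiv_lt_0_compat; lra).
  destruct (C1 x (eps/(2*K)) He) as [a1 [Ha1 P1]].
  destruct (C2 x (eps/(2*K)) He) as [a2 [Ha2 P2]].
  exists (Rmin a1 a2). split. { apply Rmin_pos; auto. }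
  intros y [Dy Hy]. simpl in *. unfold R_dist in *.
  assert (Q1 : Rabs (g1 y - g1 x) < eps/(2*K)) by (apply P1; split; auto; eapply Rlt_le_trans; [exact Hy|apply Rmin_l]).
  assert (Q2 : Rabs (g2 y - g2 x) < eps/(2*K)) by (apply P2; split; auto; eapply Rlt_le_trans; [exact Hy|apply Rmin_r]).
  pose proof (N_lip N HN (g1 y, g2 y) (g1 x, g2 x)) as L1.
  pose proof (N_lip N HN (g1 x, g2 x) (g1 y, g2 y)) as L2. simpl in L1, L2.
  rewrite (Rabs_minus_sym (g1 x)), (Rabs_minus_sym (g2 x)) in L2.
  assert (E : K * (eps/(2*K)) = eps/2) by (field; lra).
  pose proof (Rabs_pos (g1 y - g1 x)). pose proof (Rabs_pos (g2 y - g2 x)).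
  pose proof (norm_nonneg _ HN (1,0)). pose proof (norm_nonneg _ HN (0,1)).
  assert (B : (N (1,0) + N (0,1)) * (Rabs (g1 y - g1 x) + Rabs (g2 y - g2 x)) < eps).
  { apply Rle_lt_trans with (K * (Rabs (g1 y - g1 x) + Rabs (g2 y - g2 x))).
    - unfold K. nra.
    - nra. }
  apply Rabs_def1; lra.
Qed.

Definition Mu N u y := N y = 1 /\ N (psub u y) = 1.

Lemma sig_inv u y : psub u (psub u y) = y.
Proof. ptring. Qed.

Lemma det_sig u y : det u (psub u y) = - det u y.
Proof. unfold det; simpl; ring. Qed.

Lemma Mu_sig N u y : Mu N u y -> Mu N u (psub u y).
Proof. intros [H1 H2]. split; auto. rewrite sig_inv; auto. Qed.

Lemma core_nn N (HN : is_norm N) u (Hu : N u = 1) (NS : ~ SegProp N) y z :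
  Mu N u y -> Mu N u z -> z <> y -> 0 <= det u y -> 0 <= det u z -> False.
Proof.
  intros [Y1 Y2] [Z1 Z2] Hzy Hy Hz.
  destruct (Rle_or_lt (det u z) (det u y)).
  - apply (core_pos N HN u Hu NS y z); auto.
  - apply (core_pos N HN u Hu NS z y); auto. lra.
Qed.

Lemma core2 N (HN : is_norm N) u (Hu : N u = 1) (NS : ~ SegProp N) y z :
  Mu N u y -> Mu N u z -> z <> y -> z <> psub u y -> False.
Proof.
  intros My Mz H1 H2.
  destruct (Rle_or_lt 0 (det u y)) as [Dy|Dy]; destruct (Rle_or_lt 0 (det u z)) as [Dz|Dz].
  - apply (core_nn N HN u Hu NS y z); auto.
  - apply (core_nn N HN u Hu NS y (psub u z)); auto using Mu_sig.
    + intro E. apply H2. rewrite <- E, sig_inv. reflexivity.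
    + rewrite det_sig; lra.
  - apply (core_nn N HN u Hu NS (psub u y) z); auto using Mu_sig.
    rewrite det_sig; lra.
  - apply (core_nn N HN u Hu NS (psub u y) (psub u z)); auto using Mu_sig.
    + intro E. apply H1. rewrite <- (sig_inv u z), E, sig_inv. reflexivity.
    + rewrite det_sig; lra.
    + rewrite det_sig; lra.
Qed.

Lemma core3 N (HN : is_norm N) u (Hu : N u = 1) (NS : ~ SegProp N) y1 y2 y3 :
  Mu N u y1 -> Mu N u y2 -> Mu N u y3 -> y1 <> y2 -> y1 <> y3 -> y2 <> y3 -> False.
Proof.
  intros M1 M2 M3 H12 H13 H23.
  destruct (classic (y2 = psub u y1)) as [E|E].
  - apply (core2 N HN u Hu NS y1 y3); auto. congruence.
  - apply (core2 N HN u Hu NS y1 y2); auto.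
Qed.

Lemma exist_side N (HN : is_norm N) u (Hu : N u = 1) e : e * e = 1 ->
  exists y, Mu N u y /\ e * det u y > 0.
Proof.
  intros He. pose proof (u_nz N HN u Hu) as D.
  destruct u as [u1 u2]. simpl in D.
  set (w := fun t => ((1-2*t)*u1 - e*(t*(1-t))*u2, (1-2*t)*u2 + e*(t*(1-t))*u1)).
  assert (Wnz : forall t, w t <> pzero).
  { intros t E. unfold w, pzero in E. injection E as E1 E2.
    assert (A1 : (1-2*t) * (u1*u1+u2*u2) = 0).
    { replace ((1-2*t) * (u1*u1+u2*u2)) with
        (u1 * ((1-2*t)*u1 - e*(t*(1-t))*u2) + u2 * ((1-2*t)*u2 + e*(t*(1-t))*u1)) by ring.
      rewrite E1, E2; ring. }
    assert (A2 : e*(t*(1-t)) * (u1*u1+u2*u2) = 0).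
    { replace (e*(t*(1-t)) * (u1*u1+u2*u2)) with
        (u1 * ((1-2*t)*u2 + e*(t*(1-t))*u1) - u2 * ((1-2*t)*u1 - e*(t*(1-t))*u2)) by ring.
      rewrite E1, E2; ring. }
    apply Rmult_integral in A1. apply Rmult_integral in A2.
    destruct A1 as [A1|A1]; [|lra]. destruct A2 as [A2|A2]; [|lra].
    assert (t = 1/2) by lra. subst t. apply Rmult_integral in A2.
    destruct A2 as [A2|A2]; [subst e; lra|lra]. }
  set (g := fun t => N (N (w t) * u1 - fst (w t), N (w t) * u2 - snd (w t)) - N (w t)).
  assert (Cg : continuity g).
  { unfold g. apply continuity_minus.
    - apply (cont_N N HN (fun t => N (w t) * u1 - fst (w t)) (fun t => N (w t) * u2 - snd (w t))).
      + intro x. apply continuity_pt_minus.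
        * apply continuity_pt_mult; [|apply continuity_pt_const; intros a b; auto].
          unfold w; simpl. apply (cont_N N HN); intro y; reg.
        * unfold w; simpl. reg.
      + intro x. apply continuity_pt_minus.
        * apply continuity_pt_mult; [|apply continuity_pt_const; intros a b; auto].
          unfold w; simpl. apply (cont_N N HN); intro y; reg.
        * unfold w; simpl. reg.
    - unfold w; simpl. apply (cont_N N HN); intro y; reg. }
  assert (W0 : w 0 = (u1,u2)) by (unfold w; ptring).
  assert (W1 : w 1 = pscale (-1) (u1,u2)) by (unfold w; ptring).
  assert (G0 : g 0 < 0).
  { unfold g. rewrite W0, Hu. simpl.
    replace (1*u1 - u1, 1*u2-u2) with pzero by ptring. rewrite (N_zero N HN). lra. }
  assert (G1 : 0 < g 1).
  { unfold g. rewrite W1, (N_opp N HN), Hu. simpl.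
    replace (1*u1 - -1*u1, 1*u2 - -1*u2) with (pscale 2 (u1,u2)) by ptring.
    rewrite (norm_homog _ HN), Hu, Rabs_right by lra. lra. }
  destruct (IVT g 0 1 Cg ltac:(lra) G0 G1) as [t [Ht Gt]].
  assert (Ht' : 0 < t < 1).
  { split; destruct Ht as [[h|h] [h'|h']]; subst; try lra. }
  pose proof (N_pos N HN _ (Wnz t)) as Np.
  exists (pscale (/ N (w t)) (w t)). split; [split|].
  - rewrite (norm_homog _ HN), Rabs_right. field; lra.
    left; apply Rinv_0_lt_compat; auto.
  - replace (psub (u1,u2) (pscale (/ N (w t)) (w t))) with
      (pscale (/ N (w t)) (N (w t) * u1 - fst (w t), N (w t) * u2 - snd (w t))).
    2:{ apply pt_ext; simpl; field; lra. }
    rewrite (norm_homog _ HN), Rabs_right.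
    2:{ left; apply Rinv_0_lt_compat; auto. }
    unfold g in Gt. replace (N (N (w t) * u1 - fst (w t), N (w t) * u2 - snd (w t))) with (N (w t)) by lra.
    field; lra.
  - unfold det. simpl. unfold w; simpl.
    set (n := N _). assert (Np' : 0 < n) by exact Np.
    replace (e * (u1 * (/ n * ((1 - 2 * t) * u2 + e * (t * (1 - t)) * u1)) -
       u2 * (/ n * ((1 - 2 * t) * u1 - e * (t * (1 - t)) * u2))))
      with ((e*e) * (t*(1-t)) * (u1*u1+u2*u2) / n) by (field; lra).
    rewrite He. apply Rdiv_lt_0_compat; [|lra]. apply Rmult_lt_0_compat; [|lra]. nra.
Qed.

Lemma exist2 N (HN : is_norm N) u (Hu : N u = 1) :
  exists y1 y2, Mu N u y1 /\ Mu N u y2 /\ y1 <> y2.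
Proof.
  destruct (exist_side N HN u Hu 1 ltac:(lra)) as [y1 [M1 D1]].
  destruct (exist_side N HN u Hu (-1) ltac:(lra)) as [y2 [M2 D2]].
  exists y1, y2. split; [exact M1|split; [exact M2|]]. intro E; subst. lra.
Qed.

Lemma noseg_urtc N (HN : is_norm N) : ~ SegProp N -> URTC N.
Proof.
  intros NS a b Hab. set (u := psub a b).
  destruct (exist2 N HN u Hab) as [y1 [y2 [M1 [M2 D12]]]].
  assert (Conv : forall x, (N (psub a x) = 1 /\ N (psub b x) = 1) <-> Mu N u (psub x b)).
  { intro x. unfold Mu.
    replace (psub b x) with (pscale (-1) (psub x b)) by ptring.
    replace (psub u (psub x b)) with (psub a x) by (unfold u; ptring).
    rewrite (N_opp N HN). tauto. }
  exists (padd b y1), (padd b y2). split.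
  { intro E. apply D12. apply (f_equal (fun x => psub x b)) in E.
    replace (psub (padd b y1) b) with y1 in E by ptring.
    replace (psub (padd b y2) b) with y2 in E by ptring. auto. }
  intro x. rewrite Conv. split.
  - intro M. destruct (classic (x = padd b y1)) as [E1|E1]; [left; auto|].
    destruct (classic (x = padd b y2)) as [E2|E2]; [right; auto|].
    exfalso. apply (core3 N HN u Hab NS (psub x b) y1 y2); auto.
    + intro E. apply E1. rewrite <- E. ptring.
    + intro E. apply E2. rewrite <- E. ptring.
  - intros [E|E]; subst x.
    + replace (psub (padd b y1) b) with y1 by ptring. auto.
    + replace (psub (padd b y2) b) with y2 by ptring. auto.
Qed.

Lemma seg_not_urtc N (HN : is_norm N) : SegProp N -> ~ URTC N.
Proof.
  intros [c [d [Hc [Hd [L S]]]]] U.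
  unfold unit_sphere in *.
  set (l := N (psub c d)) in *.
  assert (Hdc : N (psub d c) = l) by (unfold l; apply (N_sym N HN)).
  set (u := pscale (/ l) (psub d c)).
  assert (Hu : N u = 1).
  { unfold u. rewrite (norm_homog _ HN), Hdc, Rabs_right.
    field; lra. left; apply Rinv_0_lt_compat; lra. }
  assert (Hu0 : N (psub u pzero) = 1).
  { replace (psub u pzero) with u by (unfold pzero; ptring). auto. }
  destruct (U u pzero Hu0) as [x1 [x2 [Hne Hiff]]].
  set (p := fun t => padd c (pscale t (psub d c))).
  set (x := fun t => pscale (-1) (p t)).
  assert (Sol : forall t, 0 <= t <= 1 - / l -> x t = x1 \/ x t = x2).
  { intros t Ht. assert (0 < / l < 1).
    { split. apply Rinv_0_lt_compat; lra. rewrite <- Rinv_1. apply Rinv_lt_contravar; lra. }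
    apply Hiff. split.
    - replace (psub u (x t)) with (p (t + / l)).
      + apply S. exists (t + /l). split; [lra|reflexivity].
      + unfold p, x, u; apply pt_ext; simpl; field; lra.
    - replace (psub pzero (x t)) with (p t).
      + apply S. exists t. split; [lra|reflexivity].
      + unfold p, x, pzero; ptring. }
  assert (Inj : forall t t', t <> t' -> x t <> x t').
  { intros t t' Htt E. unfold x, p in E.
    pose proof (f_equal fst E) as E1. pose proof (f_equal snd E) as E2. simpl in E1, E2.
    assert (F1 : (t - t') * (fst d - fst c) = 0) by lra.
    assert (F2 : (t - t') * (snd d - snd c) = 0) by lra.
    apply Rmult_integral in F1; apply Rmult_integral in F2.
    destruct F1 as [F1|F1]; [lra|]. destruct F2 as [F2|F2]; [lra|].
    assert (psub c d = pzero) by (unfold pzero; apply pt_ext; simpl; lra).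
    unfold l in L. rewrite H, (N_zero N HN) in L. lra. }
  assert (Hl : 0 < / l < 1).
  { split. apply Rinv_0_lt_compat; lra. rewrite <- Rinv_1. apply Rinv_lt_contravar; lra. }
  set (h := 1 - / l).
  assert (I01 : 0 <> h/2) by (unfold h; lra).
  assert (I02 : 0 <> h) by (unfold h; lra).
  assert (I12 : h/2 <> h) by (unfold h; lra).
  pose proof (Inj _ _ I01). pose proof (Inj _ _ I02). pose proof (Inj _ _ I12).
  destruct (Sol 0 ltac:(unfold h in *; lra)) as [A|A];
  destruct (Sol (h/2) ltac:(unfold h in *; lra)) as [B|B];
  destruct (Sol h ltac:(unfold h in *; lra)) as [Cc|Cc]; congruence.
Qed.

Theorem lemma1 (N : pt -> R) (HN : is_norm N) :
  ((~ URTC N) <->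
    exists c d : pt, unit_sphere N c /\ unit_sphere N d /\ N (psub c d) > 1 /\
      (forall x, segment c d x -> unit_sphere N x))
  /\ (strictly_convex N -> URTC N).
Proof.
  split.
  - split.
    + intro NU. destruct (classic (SegProp N)) as [S|S]; [exact S|].
      exfalso. apply NU. apply noseg_urtc; auto.
    + intro S. apply seg_not_urtc; auto.
  - intro SC. destruct (classic (SegProp N)) as [S|S].
    + exfalso. destruct S as [c [d [Hc [Hd [L S]]]]].
      apply (SC c d); auto. intro E; subst.
      replace (psub d d) with pzero in L by (unfold pzero; ptring).
      rewrite (N_zero N HN) in L. lra.
    + apply noseg_urtc; auto.
Qed.
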